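(* Let $0<p<1-1/e^2$ be constant and $b=\frac1{1-p}$, so that $\log b<2$. Let $c=\frac12\left(1-\frac{\log b}{2}\right)$ and $\tilde c=\min\left(\frac12\left(\frac1{\log b}-\frac12\right),\frac12\right)$. Let $(n_j)_{j\ge1}$ be a strictly increasing sequence of positive integers and $j_0$ an integer such that $j$ divides $n_j$ for all $j\ge j_0$ and $\gamma(n_j)=j+o(1)$ as $j\to\infty$, where $\gamma(n)=2\log_b n-2\log_b\log_b n-2\log_b 2$. Write $n=n_j$, $k=k_j=n_j/j$, and for $\rho\in[0,1]$ and $2\le i\le j$ let \[T_i=T_i(\rho)=\frac{e^{\rho i}\,b^{\binom i2}\,k^2\,(j!)^2}{n^i\, i!\,((j-i)!)^2}.\] Then, if $j$ is large enough, for all $\rho\in[0,c]$ and all $3\le i\le j$, \[T_i\le n^{-\tilde c}.\]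
   Context: Here $\log$ denotes the natural logarithm. In the paper, $\rho=v/n$ is the proportion of vertices lying in overlap blocks (intersections of size at least $2$ between a part of one $k$-equipartition and a part of another), and the hypothesis $\rho\le c$ is the condition defining the ''typical overlap'' range. *)

(* Defs.v *)
From Stdlib Require Import Reals Lra Lia.
From Coquelicot Require Import Coquelicot.
Open Scope R_scope.

Definition logb (b x : R) : R := ln x / ln b.

Definition gamma_b (b : R) (n : nat) : R :=
  2 * logb b (INR n) - 2 * logb b (logb b (INR n)) - 2 * logb b 2.

Definition binom2 (i : nat) : nat := Nat.div (i * (i - 1)) 2.

Definition T_i (b : R) (n j : nat) (rho : R) (i : nat) : R :=
  let k := INR n / INR j in
  exp (rho * INR i) * b ^ (binom2 i) * k ^ 2 * (INR (Stdlib.Arith.Factorial.fact j)) ^ 2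
  / ((INR n) ^ i * INR (Stdlib.Arith.Factorial.fact i) * (INR (Stdlib.Arith.Factorial.fact (j - i))) ^ 2).

(* Main.v *)
Require Import Defs.
From Stdlib Require Import Reals Lra Lia Psatz Arith Factorial.
From Coquelicot Require Import Coquelicot.
Open Scope R_scope.

Lemma expmono x y : x <= y -> exp x <= exp y.
Proof. intros [H|H]. left; apply exp_increasing; auto. subst; lra. Qed.

Lemma ln_le_sub1 y : 0 < y -> ln y <= y - 1.
Proof.
  intros Hy. destruct (Req_dec (y-1) 0) as [E|E].
  - replace y with 1 by lra. rewrite ln_1. lra.
  - pose proof (exp_ineq1 _ E). rewrite <- (ln_exp (y-1)).
    apply ln_le; lra.
Qed.

Lemma ln_ge y : 0 < y -> 1 - / y <= ln y.
Proof.
  intros Hy. pose proof (ln_le_sub1 (/ y) (Rinv_0_lt_compat _ Hy)).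
  rewrite ln_Rinv in H by lra. lra.
Qed.

Lemma ln_le_sqrt x : 0 < x -> ln x <= 2 * sqrt x.
Proof.
  intros Hx. pose proof (sqrt_lt_R0 _ Hx) as Hs.
  replace x with (sqrt x * sqrt x) at 1 by (apply sqrt_sqrt; lra).
  rewrite ln_mult by lra. pose proof (ln_le_sub1 _ Hs). lra.
Qed.

Lemma asym a C : 0 < a -> exists X, 1 <= X /\ forall x, X <= x -> ln x + C <= a * x.
Proof.
  intros Ha. set (s := (2 + Rabs C) / a + 1).
  assert (Hs : 1 <= s). { unfold s. assert (0 <= (2 + Rabs C)/a). { apply Rdiv_le_0_compat; pose proof (Rabs_pos C); lra. } lra. }
  exists (s*s). split. nra.
  intros x Hx. assert (Hx0 : 0 < x) by nra.
  pose proof (ln_le_sqrt x Hx0).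
  assert (Hsq : s <= sqrt x). { rewrite <- (sqrt_square s) by lra. apply sqrt_le_1_alt. lra. }
  assert (Hsx : sqrt x * sqrt x = x) by (apply sqrt_sqrt; lra).
  assert (a * s = 2 + Rabs C + a) by (unfold s; field; lra).
  pose proof (Rle_abs C).
  assert (a * x = (a * sqrt x) * sqrt x) by (rewrite Rmult_assoc, Hsx; ring).
  assert (a * sqrt x >= 2 + Rabs C) by nra.
  assert (a*sqrt x * sqrt x >= (2+Rabs C)*sqrt x) by (apply Rmult_ge_compat_r; lra).
  assert (Rabs C * sqrt x >= Rabs C) by (pose proof (Rabs_pos C); nra).
  lra.
Qed.

Lemma nat_big (X : R) : exists J : nat, forall j : nat, (J <= j)%nat -> X <= INR j.
Proof.
  destruct (INR_unbounded X) as [J HJ]. exists J. intros j Hj.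
  apply le_INR in Hj. lra.
Qed.

Lemma asym_nat a C : 0 < a -> exists J : nat, forall j : nat, (J <= j)%nat -> ln (INR j) + C <= a * INR j.
Proof.
  intros Ha. destruct (asym a C Ha) as [X [HX1 HX]]. destruct (nat_big X) as [J HJ].
  exists J. intros j Hj. apply HX, HJ, Hj.
Qed.

Definition lf (m : nat) : R := ln (INR (Stdlib.Arith.Factorial.fact m)).

Lemma fact_pos m : 0 < INR (Stdlib.Arith.Factorial.fact m).
Proof. apply lt_0_INR, lt_O_fact. Qed.

Lemma lf_S m : lf (S m) = lf m + ln (INR (S m)).
Proof.
  unfold lf. change (Stdlib.Arith.Factorial.fact (S m)) with (S m * Stdlib.Arith.Factorial.fact m)%nat.
  rewrite mult_INR, ln_mult. ring. apply lt_0_INR; lia. apply fact_pos.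
Qed.

Lemma lf_nonneg m : 0 <= lf m.
Proof.
  unfold lf. rewrite <- ln_1. apply ln_le. lra.
  pose proof (lt_O_fact m). apply (le_INR 1) in H. simpl in H. lra.
Qed.

Lemma ln_INR_nonneg m : 0 <= ln (INR m).
Proof.
  destruct m. simpl. unfold ln. destruct (Rlt_dec 0 0) as [h|h]. exfalso; lra. lra.
  rewrite <- ln_1. apply ln_le. lra. apply (le_INR 1). lia.
Qed.

Lemma lf_diff i m : lf (m + i) - lf m <= INR i * ln (INR (m + i)).
Proof.
  induction i.
  - rewrite Nat.add_0_r. simpl. lra.
  - replace (m + S i)%nat with (S (m + i)) by lia. rewrite lf_S.
    assert (INR i * ln (INR (m + i)) <= INR i * ln (INR (S (m + i)))).
    { destruct i. simpl; lra. apply Rmult_le_compat_l. apply pos_INR.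
      apply ln_le. apply lt_0_INR; lia. apply le_INR; lia. }
    rewrite (S_INR i). lra.
Qed.

Lemma stirling j : (1 <= j)%nat -> lf j <= 1 + (INR j + 1) * ln (INR j) - INR j.
Proof.
  induction j; intros Hj. lia.
  destruct j. unfold lf. simpl. rewrite ln_1. lra.
  specialize (IHj ltac:(lia)). rewrite lf_S.
  set (x := INR (S j)) in *. assert (Hx : 1 <= x) by (unfold x; apply (le_INR 1); lia).
  replace (INR (S (S j))) with (x + 1) by (unfold x; rewrite (S_INR (S j)); ring).
  assert (H := ln_ge ((x+1)/x) ltac:(apply Rdiv_lt_0_compat; lra)).
  rewrite ln_div in H by lra.
  replace (/ ((x+1)/x)) with (x/(x+1)) in H by (field; lra).
  assert (1 - x/(x+1) = /(x+1)) by (field; lra).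
  assert ((x+1) * (ln (x+1) - ln x) >= 1).
  { assert ((x+1) * / (x+1) = 1) by (field; lra). nra. }
  nra.
Qed.

Lemma binom2_S i : binom2 (S i) = (binom2 i + i)%nat.
Proof.
  unfold binom2. replace (S i * (S i - 1))%nat with (i * (i - 1) + i * 2)%nat.
  rewrite Nat.div_add by lia. reflexivity.
  destruct i; simpl; lia.
Qed.

Lemma binom2_R i : 2 * INR (binom2 i) = INR i * (INR i - 1).
Proof.
  induction i. simpl. unfold binom2. simpl. lra.
  rewrite binom2_S, plus_INR, S_INR. lra.
Qed.

Definition A (b : R) (n j : nat) (rho : R) (i : nat) : R :=
  rho * INR i + INR (binom2 i) * ln b + 2 * (ln (INR n) - ln (INR j)) + 2 * lf j
  - (INR i * ln (INR n) + lf i + 2 * lf (j - i)).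

Ltac pos := repeat (match goal with
 | |- 0 < exp _ => apply exp_pos
 | |- 0 < _ ^ _ => apply pow_lt
 | |- 0 < _ * _ => apply Rmult_lt_0_compat
 | |- 0 < _ / _ => apply Rdiv_lt_0_compat
 | |- 0 < / _ => apply Rinv_0_lt_compat
 end); try assumption.

Lemma T_eq b n j rho i : 0 < b -> (0 < n)%nat -> (0 < j)%nat ->
  T_i b n j rho i = exp (A b n j rho i).
Proof.
  intros Hb Hn Hj.
  assert (Hn' : 0 < INR n) by (apply lt_0_INR; lia).
  assert (Hj' : 0 < INR j) by (apply lt_0_INR; lia).
  pose proof (fact_pos j). pose proof (fact_pos i). pose proof (fact_pos (j-i)).
  unfold T_i. cbv zeta.
  set (E := exp (rho*INR i)). set (Bp := b ^ binom2 i). set (K2 := (INR n/INR j)^2).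
  set (F2 := INR (fact j) ^ 2). set (Nn := INR n ^ i). set (G := INR (fact i)).
  set (H2 := INR (fact (j-i)) ^ 2).
  assert (0 < E) by (unfold E; pos). assert (0 < Bp) by (unfold Bp; pos).
  assert (0 < K2) by (unfold K2; pos). assert (0 < F2) by (unfold F2; pos).
  assert (0 < Nn) by (unfold Nn; pos). assert (0 < H2) by (unfold H2; pos).
  assert (Hpos : 0 < E * Bp * K2 * F2 / (Nn * G * H2)) by pos.
  rewrite <- (exp_ln _ Hpos). f_equal.
  rewrite ln_div by pos.
  rewrite !ln_mult by pos.
  unfold E, Bp, K2, F2, Nn, G, H2, A, lf.
  rewrite !ln_pow by pos. rewrite ln_exp, ln_div by auto. simpl INR. ring.
Qed.

Lemma A_step b n j rho i : (S i <= j)%nat ->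
  A b n j rho (S i) - A b n j rho i =
  rho + INR i * ln b - ln (INR n) - ln (INR (S i)) + 2 * ln (INR (j - i)).
Proof.
  intros Hij. unfold A.
  assert (E : (j - i)%nat = S (j - S i)) by lia. rewrite E.
  rewrite binom2_S, plus_INR, !lf_S. rewrite (S_INR i). ring.
Qed.

Section K.
Variables (b : R) (n j : nat) (rho L N M th ct : R).
Hypotheses (HL : L = ln b) (HL0 : 0 < L) (HL2 : L < 2)
  (Hjn : (80 <= j)%nat) (Hj : 80 <= INR j) (HN : N = ln (INR n)) (HN0 : 0 <= N)
  (Hrel : N = INR j * L / 2 + M + th) (Hth1 : - ((1 - L/2)/8) <= th) (Hth2 : th <= (1 - L/2)/8)
  (HM1 : 1 <= M) (F3 : 4 * M + 6 <= (1 - L/2)/4 * N) (F4 : ln (INR j) <= M)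
  (F5 : 32 * ln (INR j) + 32 + 4 * ln (2 + 4/L) <= L * INR j)
  (F6 : M <= ln (2 + 4/L) + ln (INR j)) (Hl24 : 0 <= ln (2 + 4/L))
  (Hr0 : 0 <= rho) (Hr1 : rho <= (1 - L/2)/2) (Hct1 : ct <= /2) (Hct2 : ct * L <= (1 - L/2)/2).

Lemma lnj0 : 0 <= ln (INR j).
Proof. rewrite <- ln_1. apply ln_le; lra. Qed.

Lemma half_ct : - N / 2 <= - ct * N.
Proof. assert (ct * N <= /2 * N) by (apply Rmult_le_compat_r; lra). lra. Qed.

Lemma regA3 : A b n j rho 3 <= - N / 2.
Proof.
  pose proof lnj0.
  unfold A. rewrite <- HL, <- HN.
  assert (E : j = ((j - 3) + 3)%nat) by lia.
  pose proof (lf_diff 3 (j - 3)). rewrite <- E in H0.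
  pose proof (lf_nonneg 3).
  replace (INR (binom2 3)) with 3 by (unfold binom2; simpl; lra).
  replace (INR 3) with 3 in * by (simpl; lra).
  lra.
Qed.

Lemma regA i : (3 <= i)%nat -> (4 * i <= j)%nat -> A b n j rho i <= A b n j rho 3.
Proof.
  pose proof lnj0.
  induction i; intros H3 H4. lia.
  destruct (Nat.eq_dec i 2). subst; lra.
  specialize (IHi ltac:(lia) ltac:(lia)).
  pose proof (A_step b n j rho i ltac:(lia)). rewrite <- HL, <- HN in H0.
  assert (INR i * L <= INR j * L / 4).
  { assert (INR (4 * i) <= INR j) by (apply le_INR; lia). rewrite mult_INR in H1. simpl in H1.
    assert (INR i <= INR j / 4) by lra. 
    apply (Rmult_le_compat_r L) in H2; lra. }
  assert (ln (INR (j - i)) <= ln (INR j)).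
  { apply ln_le. apply lt_0_INR; lia. apply le_INR; lia. }
  pose proof (ln_INR_nonneg (S i)).
  lra.
Qed.

Lemma regB i : (j <= 4 * i)%nat -> (4 * i <= 3 * j)%nat -> A b n j rho i <= - N / 2.
Proof.
  intros H1 H2. pose proof lnj0.
  unfold A. rewrite <- HL, <- HN.
  assert (E : j = ((j - i) + i)%nat) by lia.
  pose proof (lf_diff i (j - i)). rewrite <- E in H0.
  pose proof (lf_nonneg i).
  pose proof (binom2_R i).
  assert (Hi1 : INR j <= 4 * INR i) by (apply le_INR in H1; rewrite mult_INR in H1; simpl in H1; lra).
  assert (Hi2 : 4 * INR i <= 3 * INR j) by (apply le_INR in H2; rewrite !mult_INR in H2; simpl in H2; lra).
  set (ir := INR i) in *.
  assert (Hbr : rho + (ir - 1) * L / 2 + 2 * ln (INR j) - N <= - N / 8).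
  { assert (ir * L <= 3 * INR j / 4 * L) by (apply Rmult_le_compat_r; lra). lra. }
  assert (ir * (rho + (ir - 1) * L / 2 + 2 * ln (INR j) - N) <= ir * (- N/8))
    by (apply Rmult_le_compat_l; lra).
  assert (ir * N >= 20 * N) by nra.
  assert (Hb2 : INR (binom2 i) * L = ir * (ir - 1) / 2 * L) by (rewrite <- H4; field).
  rewrite Hb2. nra.
Qed.

Lemma regC_step i : (S i <= j)%nat -> (3 * j <= 4 * i)%nat -> A b n j rho i <= A b n j rho (S i).
Proof.
  intros H1 H2. pose proof lnj0.
  pose proof (A_step b n j rho i H1). rewrite <- HL, <- HN in H0.
  pose proof (ln_INR_nonneg (j - i)).
  assert (ln (INR (S i)) <= ln (INR j)).
  { apply ln_le. apply lt_0_INR; lia. apply le_INR; lia. }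
  assert (3 * INR j / 4 * L <= INR i * L).
  { apply Rmult_le_compat_r. lra. apply le_INR in H2; rewrite !mult_INR in H2; simpl in H2; lra. }
  lra.
Qed.

Lemma regC d : forall i, (i + d = j)%nat -> (3 * j <= 4 * i)%nat -> A b n j rho i <= A b n j rho j.
Proof.
  induction d; intros i H1 H2.
  - replace i with j by lia. lra.
  - pose proof (regC_step i ltac:(lia) H2). specialize (IHd (S i) ltac:(lia) ltac:(lia)). lra.
Qed.

Lemma regJ : A b n j rho j <= - ct * N.
Proof.
  pose proof lnj0.
  assert (Hj1 : (1 <= j)%nat) by lia.
  pose proof (stirling j Hj1).
  pose proof (binom2_R j).
  assert (Aeq : A b n j rho j = rho * INR j + INR j * (INR j - 1) / 2 * L + 2 * (N - ln (INR j))
     + lf j - INR j * N).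
  { unfold A. rewrite <- HL, <- HN. rewrite Nat.sub_diag.
    replace (lf 0) with 0 by (unfold lf; simpl; rewrite ln_1; auto).
    replace (INR (binom2 j)) with (INR j * (INR j - 1) / 2) by lra. ring. }
  set (jr := INR j) in *.
  assert (Hbr : rho + (jr - 1) * L / 2 + ln jr - 1 - N <= 13 * (1 - L/2) / 8 - 2) by lra.
  assert (jr * (rho + (jr - 1) * L / 2 + ln jr - 1 - N) <= jr * (13 * (1 - L/2) / 8 - 2))
    by (apply Rmult_le_compat_l; lra).
  assert (HA : A b n j rho j <= jr * (13 * (1 - L/2) / 8 - 2) + 2 * N + 1) by nra.
  assert (HLA : L * A b n j rho j <= L * (jr * (13 * (1 - L/2) / 8 - 2) + 2 * N + 1))
    by (apply Rmult_le_compat_l; lra).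
  assert (Hr2 : jr * L * L = 2 * (N - M - th) * L) by (rewrite Hrel; field).
  assert (L * (M + th) <= 2 * (M + th)) by (apply Rmult_le_compat_r; lra).
  assert (ct * L * N <= (1 - L/2)/2 * N) by (apply Rmult_le_compat_r; lra).
  apply (Rmult_le_reg_l L). lra.
  assert (jr * L = 2 * (N - M - th)) by (rewrite Hrel; field).
  nra.
Qed.

Lemma keyK i : (3 <= i)%nat -> (i <= j)%nat -> A b n j rho i <= - ct * N.
Proof.
  intros H1 H2. pose proof half_ct. pose proof regJ.
  destruct (le_lt_dec (4 * i) j).
  - pose proof regA3. pose proof (regA i H1 l). lra.
  - destruct (le_lt_dec (4 * i) (3 * j)).
    + pose proof (regB i ltac:(lia) l0). lra.
    + pose proof (regC (j - i) i ltac:(lia) ltac:(lia)). lra.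
Qed.
End K.

Lemma nseq_ge (nseq : nat -> nat) :
  (forall j : nat, (1 <= j)%nat -> (0 < nseq j)%nat) ->
  (forall j : nat, (1 <= j)%nat -> (nseq j < nseq (S j))%nat) ->
  forall j, (1 <= j)%nat -> (j <= nseq j)%nat.
Proof.
  intros Hp Hi. induction j; intros Hj. lia.
  destruct j. specialize (Hp 1%nat ltac:(lia)). lia.
  specialize (IHj ltac:(lia)). specialize (Hi (S j) ltac:(lia)). lia.
Qed.

Theorem lemma6 (p : R) (nseq : nat -> nat) (j0 : nat) :
  0 < p -> p < 1 - 1 / exp 2 ->
  (forall j : nat, (1 <= j)%nat -> (0 < nseq j)%nat) ->
  (forall j : nat, (1 <= j)%nat -> (nseq j < nseq (S j))%nat) ->
  (forall j : nat, (1 <= j)%nat -> (j0 <= j)%nat -> Nat.divide j (nseq j)) ->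
  is_lim_seq (fun j : nat => gamma_b (1 / (1 - p)) (nseq j) - INR j) 0 ->
  let b := 1 / (1 - p) in
  let c := / 2 * (1 - ln b / 2) in
  let ct := Rmin (/ 2 * (/ ln b - / 2)) (/ 2) in
  exists J : nat, forall j : nat, (J <= j)%nat ->
    forall rho : R, 0 <= rho <= c ->
    forall i : nat, (3 <= i)%nat -> (i <= j)%nat ->
      T_i b (nseq j) j rho i <= Rpower (INR (nseq j)) (- ct).
Proof.
  intros Hp Hp2 Hpos Hinc Hdiv Hlim. cbv zeta.
  set (b := 1 / (1 - p)) in *.
  assert (He2 : 0 < exp 2) by apply exp_pos.
  assert (Hb1 : 1 < b).
  { unfold b. apply (Rmult_lt_reg_r (1-p)). assert (0 < 1 / exp 2) by (apply Rdiv_lt_0_compat; lra). lra.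
    replace (1/(1-p)*(1-p)) with 1 by (field; assert (0 < 1 / exp 2) by (apply Rdiv_lt_0_compat; lra); lra). lra. }
  assert (Hb2 : b < exp 2).
  { assert (0 < 1 / exp 2) by (apply Rdiv_lt_0_compat; lra).
    unfold b. apply (Rmult_lt_reg_r (1-p)). lra.
    replace (1/(1-p)*(1-p)) with 1 by (field; lra).
    assert (exp 2 * (1 / exp 2) < exp 2 * (1 - p)) by (apply Rmult_lt_compat_l; lra).
    replace (exp 2 * (1 / exp 2)) with 1 in H0 by (field; lra). lra. }
  set (L := ln b) in *.
  assert (HL0 : 0 < L). { unfold L. rewrite <- ln_1. apply ln_increasing; lra. }
  assert (HL2 : L < 2). { unfold L. rewrite <- (ln_exp 2). apply ln_increasing; lra. }
  set (ct := Rmin (/ 2 * (/ L - / 2)) (/ 2)).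
  assert (Hct1 : ct <= /2) by apply Rmin_r.
  assert (Hct2 : ct * L <= (1 - L/2)/2).
  { assert (ct * L <= / 2 * (/ L - / 2) * L) by (apply Rmult_le_compat_r; [lra | apply Rmin_l]).
    replace (/ 2 * (/ L - / 2) * L) with ((1 - L/2)/2) in H by (field; lra). lra. }
  set (q := 1 - L/2).
  assert (Hq : 0 < q) by (unfold q; lra).
  apply is_lim_seq_spec in Hlim.
  assert (Heps : 0 < q / (4 * L)) by (apply Rdiv_lt_0_compat; lra).
  destruct (Hlim (mkposreal _ Heps)) as [J1 HJ1]. simpl in HJ1.
  destruct (asym (L/4) 0 ltac:(lra)) as [Xb [_ HXb]].
  destruct (asym (q*L/32) (3/2) ltac:(nra)) as [Xc [_ HXc]].
  set (X := Rmax 3 (Rmax (L*Xb/2) (L*Xc/2))).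
  assert (HX1 : 3 <= X) by apply Rmax_l.
  assert (HX2 : L*Xb/2 <= X) by (eapply Rle_trans; [apply Rmax_l | apply Rmax_r]).
  assert (HX3 : L*Xc/2 <= X) by (eapply Rle_trans; [apply Rmax_r | apply Rmax_r]).
  destruct (nat_big (exp X)) as [J2 HJ2].
  destruct (asym_nat (L/32) (1 + ln (2 + 4/L) / 8) ltac:(lra)) as [J3 HJ3].
  exists (max J1 (max J2 (max J3 80))).
  intros j Hj rho Hrho i Hi3 Hij.
  assert (Hjn : (80 <= j)%nat) by lia.
  assert (Hjr : 80 <= INR j).
  { apply le_INR in Hjn. replace (INR 80) with 80 in Hjn by (simpl; lra). lra. }
  set (n := nseq j) in *.
  assert (Hn : (0 < n)%nat) by (apply Hpos; lia).
  assert (Hjle : (j <= n)%nat) by (apply nseq_ge; auto; lia).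
  rewrite T_eq by (lra || lia). unfold Rpower. apply expmono.
  set (N := ln (INR n)).
  set (jr := INR j) in *.
  assert (HlnjX : X <= ln jr).
  { rewrite <- (ln_exp X). apply ln_le. apply exp_pos. apply HJ2. lia. }
  assert (HNj : ln jr <= N) by (apply ln_le; [lra | apply le_INR; auto]).
  assert (HN3 : 3 <= N) by lra.
  set (x := 2 * N / L).
  assert (HLx : L * x = 2 * N) by (unfold x; field; lra).
  assert (Hxb : Xb <= x) by (apply (Rmult_le_reg_l L); lra).
  assert (Hxc : Xc <= x) by (apply (Rmult_le_reg_l L); lra).
  assert (HxN : N <= x) by (apply (Rmult_le_reg_l L); nra).
  set (M := ln (N / L) + ln 2).
  assert (HMx : M = ln x).
  { unfold M, x. replace (2 * N / L) with (2 * (N / L)) by (field; lra).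
    rewrite ln_mult; [ring | lra | apply Rdiv_lt_0_compat; lra]. }
  assert (HM1 : 1 <= M).
  { rewrite HMx. rewrite <- (ln_exp 1). apply ln_le. apply exp_pos. pose proof exp_le_3. lra. }
  assert (HM2 : M <= N / 2).
  { rewrite HMx. specialize (HXb x Hxb). replace (L/4*x) with (N/2) in HXb by (unfold x; field; lra). lra. }
  assert (F3 : 4 * M + 6 <= (1 - L/2)/4 * N).
  { rewrite HMx. specialize (HXc x Hxc). replace (q*L/32*x) with (q/16*N) in HXc by (unfold x; field; lra).
    unfold q in HXc. lra. }
  set (th := N - M - jr * L / 2).
  assert (Hrel : N = jr * L / 2 + M + th) by (unfold th; ring).
  specialize (HJ1 j ltac:(lia)).
  assert (Hg : gamma_b b n - jr = th * (2 / L)).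
  { unfold gamma_b, logb. fold L. fold N. unfold th, M. field. lra. }
  rewrite Rminus_0_r in HJ1. fold n jr in HJ1. rewrite Hg in HJ1.
  apply Rabs_def2 in HJ1. destruct HJ1 as [Ha1 Ha2].
  assert (Hth2 : th <= (1 - L/2)/8).
  { assert (th * (2/L) * (L/2) <= q / (4 * L) * (L/2)) by (apply Rmult_le_compat_r; lra).
    replace (th * (2/L) * (L/2)) with th in H by (field; lra).
    replace (q / (4 * L) * (L/2)) with (q/8) in H by (field; lra). unfold q in H. lra. }
  assert (Hth1 : - ((1 - L/2)/8) <= th).
  { assert (- (q / (4 * L)) * (L/2) <= th * (2/L) * (L/2)) by (apply Rmult_le_compat_r; lra).
    replace (th * (2/L) * (L/2)) with th in H by (field; lra).
    replace (- (q / (4 * L)) * (L/2)) with (-(q/8)) in H by (field; lra). unfold q in H. lra. }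
  assert (F4 : ln jr <= M).
  { rewrite HMx. apply ln_le. lra. apply (Rmult_le_reg_l L). lra. lra. }
  assert (F5 : 32 * ln jr + 32 + 4 * ln (2 + 4/L) <= L * jr).
  { specialize (HJ3 j ltac:(lia)). fold jr in HJ3. lra. }
  assert (H4L : 0 < 4 / L) by (apply Rdiv_lt_0_compat; lra).
  assert (Hl24 : 0 <= ln (2 + 4/L)) by (rewrite <- ln_1; apply ln_le; lra).
  assert (F6 : M <= ln (2 + 4/L) + ln jr).
  { rewrite HMx. rewrite <- ln_mult by lra. apply ln_le. apply Rlt_le_trans with N; lra.
    apply (Rmult_le_reg_l L). lra. rewrite HLx.
    replace (L * ((2 + 4/L) * jr)) with (2 * L * jr + 4 * jr) by (field; lra). nra. }
  assert (HN0 : 0 <= N) by lra.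
  destruct Hrho as [Hr0 Hr1].
  unfold q in Hr1.
  eapply (keyK b n j rho L N M th ct); eauto; try lra.
Qed.
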